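(* Let $\mathcal{H}$ be a real Hilbert space, $f:\mathcal{H}\to\mathbb{R}$ $\mu$-strongly convex and $L$-smooth with $0<\mu<L<\infty$, $g:\mathcal{H}\to\mathbb{R}\cup\{+\infty\}$ convex, proper and lower semicontinuous, $q=\mu/L$, and $x^\star$ the unique minimizer of $f+g$. Let the Prox-ITEM iterates and the quantities $\mathcal{V}_k$ be as defined in the context. Then $\mathcal{V}_{k+1}\le\mathcal{V}_k$ for every $k\in\mathbb{N}_0$.
   Context: $\operatorname{Prox}^{\gamma}_g(x)=\operatorname{argmin}_z\big(g(z)+\frac{1}{2\gamma}\|x-z\|^2\big)$. Prox-ITEM from $x^0\in\mathcal{H}$: $A_0=0$, $z^0=x^0$, and for $k\ge0$: $A_{k+1}=\frac{(1+q)A_k+2(1+\sqrt{(1+A_k)(1+qA_k)})}{(1-q)^2}$, $\beta_k=\frac{A_k}{(1-q)A_{k+1}}$, $\delta_k=\sqrt{\frac{A_{k+1}}{1+qA_{k+1}}}$, $y^k=(1-\beta_k)z^k+\beta_kx^k$, $\bar z^{k+1}=(1-q\delta_k)z^k+q\delta_ky^k-\frac{\delta_k}{L}\nabla f(y^k)$, $z^{k+1}=\operatorname{Prox}^{\delta_k/L}_g(\bar z^{k+1})$, $x^{k+1}=y^k-\frac1L\nabla f(y^k)-\frac1{\delta_k}(\bar z^{k+1}-z^{k+1})$. Define $\mathcal{I}_f(x,y)=f(x)-f(y)-\langle\nabla f(y),x-y\rangle-\frac{\mu}{2}\|x-y\|^2-\frac{1}{2(L-\mu)}\|\nabla f(x)-\nabla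 f(y)-\mu(x-y)\|^2$ and $\mathcal{I}_g(x,y,s)=g(x)-g(y)-\langle s,x-y\rangle$. Let $s_g^k=L\delta_{k-1}^{-1}(\bar z^k-z^k)$ for $k\ge1$ (so $s_g^k\in\partial g(z^k)$), $s_g^\star=-\nabla f(x^\star)$, and $\sigma_k=\sqrt{(1+A_k)(1+qA_k)}$. For $k\in\mathbb{N}_0$, $$\mathcal{V}_k=(1-q)A_k\mathcal{I}_f(y^{k-1},x^\star)+qA_k\mathcal{I}_g(x^\star,z^k,s_g^k)+(qA_k+1-\sigma_k)\mathcal{I}_g(z^k,x^\star,s_g^\star)+\frac{A_k}{2L}\|s_g^k-s_g^\star\|^2+(L+\mu A_k)\|z^k-x^\star\|^2,$$ with the conventions $y^{-1}=y^0$, $s_g^0=s_g^1$, $0\cdot(\pm\infty)=0$. *)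

(* Defs.v *)
From mathcomp Require Import all_boot all_order all_algebra.
From mathcomp Require Import reals constructive_ereal.

Set Implicit Arguments.
Unset Strict Implicit.
Unset Printing Implicit Defensive.

Import Order.TTheory GRing.Theory Num.Theory.
Local Open Scope ring_scope.

Section Hilbert.
Variables (R : realType) (V : lmodType R).

Definition is_inner_product (ip : V -> V -> R) : Prop :=
  [/\ (forall x y, ip x y = ip y x),
      (forall a x y z, ip (a *: x + y) z = a * ip x z + ip y z),
      (forall x, 0 <= ip x x) &
      (forall x, ip x x = 0 -> x = 0)].

Definition hnorm (ip : V -> V -> R) (x : V) : R := Num.sqrt (ip x x).
Definition nsq (ip : V -> V -> R) (x : V) : R := ip x x.

Definition is_hilbert (ip : V -> V -> R) : Prop :=
  is_inner_product ip /\
  forall u : nat -> V,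
    (forall e : R, 0 < e -> exists N : nat, forall m n : nat,
        (N <= m)%N -> (N <= n)%N -> hnorm ip (u m - u n) < e) ->
    exists l : V, forall e : R, 0 < e -> exists N : nat, forall n : nat,
        (N <= n)%N -> hnorm ip (u n - l) < e.

Definition is_gradient (ip : V -> V -> R) (f : V -> R) (gradf : V -> V) : Prop :=
  forall x : V, forall e : R, 0 < e -> exists d : R, 0 < d /\
    forall h : V, hnorm ip h < d ->
      `| f (x + h) - f x - ip (gradf x) h | <= e * hnorm ip h.

Definition strongly_convex (ip : V -> V -> R) (mu : R) (f : V -> R) : Prop :=
  forall (x y : V) (l : R), 0 <= l <= 1 ->
    f (l *: x + (1 - l) *: y) <=
      l * f x + (1 - l) * f y - mu / 2 * l * (1 - l) * nsq ip (x - y).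

Definition L_smooth (ip : V -> V -> R) (L : R) (f : V -> R) (gradf : V -> V) : Prop :=
  is_gradient ip f gradf /\
  forall x y : V, hnorm ip (gradf x - gradf y) <= L * hnorm ip (x - y).

Local Open Scope ereal_scope.

Definition econvex (g : V -> \bar R) : Prop :=
  forall (x y : V) (l : R), (0 <= l <= 1)%R ->
    g (l *: x + (1 - l) *: y)%R <= l%:E * g x + (1 - l)%R%:E * g y.

Definition eproper (g : V -> \bar R) : Prop :=
  (forall x, g x != -oo) /\ (exists x, g x < +oo).

Definition elsc (ip : V -> V -> R) (g : V -> \bar R) : Prop :=
  forall (x : V) (t : \bar R), t < g x ->
    exists d : R, (0 < d)%R /\ forall y : V, (hnorm ip (y - x) < d)%R -> t < g y.

Definition is_prox (ip : V -> V -> R) (g : V -> \bar R) (gam : R) (x z : V) : Prop :=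
  forall w : V,
    g z + (1 / (2 * gam) * nsq ip (x - z))%:E <= g w + (1 / (2 * gam) * nsq ip (x - w))%:E.

Local Close Scope ereal_scope.

Definition If (ip : V -> V -> R) (mu L : R) (f : V -> R) (gradf : V -> V) (x y : V) : R :=
  f x - f y - ip (gradf y) (x - y) - mu / 2 * nsq ip (x - y)
  - 1 / (2 * (L - mu)) * nsq ip (gradf x - gradf y - mu *: (x - y)).

Definition Ig (ip : V -> V -> R) (g : V -> \bar R) (x y s : V) : \bar R :=
  (g x - g y - (ip s (x - y))%:E)%E.

End Hilbert.

Section Seq.
Variable R : realType.
Local Open Scope ring_scope.

Fixpoint Aseq (q : R) (k : nat) : R :=
  match k with
  | 0 => 0
  | k'.+1 =>
      let a := Aseq q k' in
      ((1 + q) * a + 2 * (1 + Num.sqrt ((1 + a) * (1 + q * a)))) / (1 - q) ^+ 2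
  end.

Definition beta (q : R) (k : nat) : R := Aseq q k / ((1 - q) * Aseq q k.+1).
Definition delta (q : R) (k : nat) : R :=
  Num.sqrt (Aseq q k.+1 / (1 + q * Aseq q k.+1)).
Definition sigma (q : R) (k : nat) : R :=
  Num.sqrt ((1 + Aseq q k) * (1 + q * Aseq q k)).
End Seq.

Section Lyap.
Variables (R : realType) (V : lmodType R).
Local Open Scope ring_scope.

(* s_g^k = L delta_{k-1}^{-1} (zbar^k - z^k) for k >= 1, and s_g^0 = s_g^1 *)
Definition sg (q L : R) (zbar z : nat -> V) (k : nat) : V :=
  let k' := maxn k 1 in (L / delta q k'.-1) *: (zbar k' - z k').

(* y^{k-1} with the convention y^{-1} = y^0 *)
Definition yprev (y : nat -> V) (k : nat) : V := y k.-1.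

(* the Lyapunov quantity V_k (extended real; 0 * (+-oo) = 0 in mathcomp) *)
Definition Vk (ip : V -> V -> R) (mu L : R) (f : V -> R) (gradf : V -> V)
    (g : V -> \bar R) (xstar : V) (zbar z y : nat -> V) (k : nat) : \bar R :=
  let q := mu / L in
  let A := Aseq q k in
  let s := sg q L zbar z k in
  let sstar := - gradf xstar in
  (((1 - q) * A * If ip mu L f gradf (yprev y k) xstar)%:E
   + (q * A)%:E * Ig ip g xstar (z k) s
   + (q * A + 1 - sigma q k)%:E * Ig ip g (z k) xstar sstar
   + (A / (2 * L) * nsq ip (s - sstar))%:E
   + ((L + mu * A) * nsq ip (z k - xstar))%:E)%E.
End Lyap.

(* Main.v *)
Require Import Defs.
From mathcomp Require Import all_boot all_order all_algebra.
From mathcomp Require Import reals constructive_ereal.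
From mathcomp Require Import ring lra.
Import Order.TTheory GRing.Theory Num.Theory.
Local Open Scope ring_scope.
Set Implicit Arguments.
Unset Strict Implicit.

Section IP.
Variables (R : realType) (V : lmodType R) (ip : V -> V -> R).
Hypothesis hip : is_inner_product ip.

Lemma ipC x y : ip x y = ip y x.
Proof. by case: hip. Qed.
Lemma ipDl x y z : ip (x + y) z = ip x z + ip y z.
Proof. case: hip => _ h _ _. by have := h 1 x y z; rewrite scale1r mul1r. Qed.
Lemma ip0l z : ip 0 z = 0.
Proof.
case: hip => _ h _ _. have := h 1 0 0 z. rewrite scaler0 addr0 mul1r => /eqP.
by rewrite -subr_eq0 opprD addrA subrr add0r oppr_eq0 => /eqP.
Qed.
Lemma ipZl a x z : ip (a *: x) z = a * ip x z.
Proof. case: hip => _ h _ _. by have := h a x 0 z; rewrite addr0 ip0l addr0. Qed.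
Lemma ipNl x z : ip (- x) z = - ip x z.
Proof. by rewrite -scaleN1r ipZl mulN1r. Qed.
Lemma ipBl x y z : ip (x - y) z = ip x z - ip y z.
Proof. by rewrite ipDl ipNl. Qed.
Lemma ipDr x y z : ip z (x + y) = ip z x + ip z y.
Proof. by rewrite ipC ipDl !(ipC z). Qed.
Lemma ipZr a x z : ip z (a *: x) = a * ip z x.
Proof. by rewrite ipC ipZl ipC. Qed.
Lemma ipNr x z : ip z (- x) = - ip z x.
Proof. by rewrite ipC ipNl ipC. Qed.
Lemma ipBr x y z : ip z (x - y) = ip z x - ip z y.
Proof. by rewrite ipDr ipNr. Qed.
Lemma ip_ge0 x : 0 <= ip x x.
Proof. by case: hip. Qed.
Lemma nsq_ge0 x : 0 <= nsq ip x.
Proof. exact: ip_ge0. Qed.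
End IP.

Section Quote.
Variables (R : realType) (V : lmodType R) (ip : V -> V -> R).
Hypothesis hip : is_inner_product ip.

Inductive vexp := VA of nat | VAdd of vexp & vexp | VOpp of vexp | VScale of R & vexp | V0.

Fixpoint veval (env : seq V) (e : vexp) : V :=
  match e with
  | VA i => nth 0 env i
  | VAdd a b => veval env a + veval env b
  | VOpp a => - veval env a
  | VScale r a => r *: veval env a
  | V0 => 0
  end.

Definition Gm (env : seq V) (i j : nat) : R :=
  if Nat.leb i j then ip (nth 0 env i) (nth 0 env j) else ip (nth 0 env j) (nth 0 env i).

Fixpoint ipy (env : seq V) (i : nat) (e : vexp) : R :=
  match e with
  | VA j => Gm env i j
  | VAdd a b => ipy env i a + ipy env i b
  | VOpp a => - ipy env i a
  | VScale r a => r * ipy env i a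
  | V0 => 0
  end.

Fixpoint ipx (env : seq V) (e1 e2 : vexp) : R :=
  match e1 with
  | VA i => ipy env i e2
  | VAdd a b => ipx env a e2 + ipx env b e2
  | VOpp a => - ipx env a e2
  | VScale r a => r * ipx env a e2
  | V0 => 0
  end.

Lemma ipy_ok env i e : ip (nth 0 env i) (veval env e) = ipy env i e.
Proof.
elim: e => [j|a iha b ihb|a iha|r a iha|] /=.
- rewrite /Gm; case: (Nat.leb i j) => //; exact: ipC.
- by rewrite ipDr // iha ihb.
- by rewrite ipNr // iha.
- by rewrite ipZr // iha.
- by rewrite -(scale0r (0 : V)) ipZr // mul0r.
Qed.

Lemma ip_quote env e1 e2 : ip (veval env e1) (veval env e2) = ipx env e1 e2.
Proof.
elim: e1 => [i|a iha b ihb|a iha|r a iha|] /=.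
- exact: ipy_ok.
- by rewrite ipDl // iha ihb.
- by rewrite ipNl // iha.
- by rewrite ipZl // iha.
- by rewrite ip0l.
Qed.
End Quote.

Ltac vq R env t :=
  lazymatch t with
  | @GRing.add _ ?a ?b => let ea := vq R env a in let eb := vq R env b in constr:(VAdd ea eb)
  | @GRing.opp _ ?a => let ea := vq R env a in constr:(VOpp ea)
  | @GRing.scale _ _ ?r ?a => let ea := vq R env a in constr:(VScale r ea)
  | @GRing.zero _ => constr:(@V0 R)
  | _ => let rec find l n :=
           lazymatch l with
           | (t :: _)%SEQ => constr:(@VA R n)
           | (_ :: ?tl)%SEQ => find tl (S n)
           | _ => fail "atom not found" t
           end in find env O
  end.

Ltac expand_all R ip hip env :=
  repeat match goal with
  | |- context [ip ?u ?v] =>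
      let e1 := vq R env u in let e2 := vq R env v in
      rewrite (ip_quote hip env e1 e2)
  end;
  cbv beta iota zeta delta [ipx ipy Gm Nat.leb nth].


Section K.
Variables (R : realType) (V : lmodType R).
Definition Ifr (ip : V -> V -> R) (mu L : R) (fa fb : R) (ga gb a b : V) : R :=
  fa - fb - ip gb (a - b) - mu / 2 * nsq ip (a - b)
  - 1 / (2 * (L - mu)) * nsq ip (ga - gb - mu *: (a - b)).
Definition Igr (ip : V -> V -> R) (ga gb : R) (s a b : V) : R := ga - gb - ip s (a - b).
Definition RV (ip : V -> V -> R) (mu L A sig IfV gxs gz : R) (xs z s gs : V) : R :=
  (1 - mu / L) * A * IfV + mu / L * A * Igr ip gxs gz s xs z
  + (mu / L * A + 1 - sig) * Igr ip gz gxs (- gs) z xs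
  + A / (2 * L) * nsq ip (s - - gs) + (L + mu * A) * nsq ip (z - xs).

Definition KeyStmt (ip : V -> V -> R) (mu L A sig A1 del sig1 : R)
  (xs z yp gp s gs gy sp y zb z1 : V) (fyp fy fxs gxs gz gz1 : R) : Prop :=
  let q := mu / L in let bet := A / ((1 - q) * A1) in
  y = (1 - bet) *: z + bet *: (yp - L^-1 *: (gp + s)) ->
  zb = (1 - q * del) *: z + (q * del) *: y - (del / L) *: gy ->
  z1 = zb - (del / L) *: sp ->
  RV ip mu L A1 sig1 (Ifr ip mu L fy fxs gy gs y xs) gxs gz1 xs z1 sp gs
  - RV ip mu L A sig (Ifr ip mu L fyp fxs gp gs yp xs) gxs gz xs z s gs
  + (1 - q) * A * Ifr ip mu L fyp fy gp gy yp y
  + (1 - q) * (A1 - A) * Ifr ip mu L fxs fy gs gy xs y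
  + (sig - 1) * Igr ip gz1 gz s z1 z
  + (sig1 - sig + A1 - A) * Igr ip gz1 gxs (- gs) z1 xs
  + (A1 - A) * Igr ip gxs gz1 sp xs z1
  = - (A / (2 * L)) * nsq ip (sp - s) - ((A1 - A) / (2 * L)) * nsq ip (sp + gs).

Lemma key (ip : V -> V -> R) (hip : is_inner_product ip) (mu L a b sig1 : R)
  (xs z yp gp s gs gy sp y zb z1 : V) (fyp fy fxs gxs gz gz1 : R) :
  0 < L -> 1 < b -> b < a -> mu = L * (b ^+ 2 - 1) / (a ^+ 2 - 1) ->
  KeyStmt ip mu L (a ^+ 2 - 1) (a * b) ((a + b) ^+ 2 / (1 - mu / L) ^+ 2)
    ((a + b) / (mu / L * a + b)) sig1 xs z yp gp s gs gy sp y zb z1 fyp fy fxs gxs gz gz1.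
Proof.
move=> hL hb hab hmu; rewrite /KeyStmt => hy hzb hz1.
subst z1 zb y.
rewrite /RV /Ifr /Igr /nsq.
expand_all R ip hip [:: xs; z; yp; gp; s; gs; gy; sp].
subst mu.
field.
have ha1 : 0 < a ^+ 2 - 1 by nra.
have hb1 : 0 < b ^+ 2 - 1 by nra.
have hab2 : 0 < a ^+ 2 - 1 - (b ^+ 2 - 1) by nra.
repeat (apply/andP; split); apply: lt0r_neq0; nra.
Qed.

Lemma key0 (ip : V -> V -> R) (hip : is_inner_product ip) (mu L sig1 : R)
  (xs z yp gp s gs gy sp y zb z1 : V) (fyp fy fxs gxs gz gz1 : R) :
  0 < L -> 0 < mu -> mu < L ->
  KeyStmt ip mu L (1 ^+ 2 - 1) (1 * 1) ((1 + 1) ^+ 2 / (1 - mu / L) ^+ 2) ((1 + 1) / (mu / L * 1 + 1))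
    sig1 xs z yp gp s gs gy sp y zb z1 fyp fy fxs gxs gz gz1.
Proof.
move=> hL hm hmL; rewrite /KeyStmt => hy hzb hz1.
subst z1 zb y.
rewrite /RV /Ifr /Igr /nsq.
expand_all R ip hip [:: xs; z; yp; gp; s; gs; gy; sp].
field.
repeat (apply/andP; split); apply: lt0r_neq0; lra.
Qed.
End K.


Lemma eps_le0 (R : realType) (x c : R) : 0 <= c -> (forall e, 0 < e -> x <= e * c) -> x <= 0.
Proof.
move=> hc h; rewrite leNgt; apply/negP => hx.
have he : 0 < x / (2 * (c + 1)) by apply: divr_gt0 => //; lra.
have := h _ he.
have -> : x / (2 * (c + 1)) * c = x * (c / (2 * (c + 1))) by rewrite mulrAC mulrA.
have hlt : c / (2 * (c + 1)) < 1 by rewrite ltr_pdivrMr; lra.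
have hge : 0 <= c / (2 * (c + 1)) by apply: divr_ge0 => //; lra.
nra.
Qed.

Lemma lim_t (R : realType) (X K : R) : 0 <= K ->
  (forall t, 0 < t -> t <= 1 -> t * X <= t ^+ 2 * K) -> X <= 0.
Proof.
move=> hK h; rewrite leNgt; apply/negP => hX.
have hXK : 0 < X + K by lra.
have ht0 : 0 < X / (X + K) by apply: divr_gt0.
have ht1 : X / (X + K) <= 1 by rewrite ler_pdivrMr //; lra.
have := h _ ht0 ht1.
set t := X / (X + K).
have ht : t * (X + K) = X by rewrite /t mulfVK // gt_eqF.
have htK : t * K = X - t * X by lra.
have e2 : t ^+ 2 * K = t * X - t * (t * X) by rewrite expr2 -mulrA htK; ring.
have htX : 0 < t * X by apply: mulr_gt0.
rewrite e2 => h'.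
have : 0 < t * (t * X) by apply: mulr_gt0.
lra.
Qed.

Lemma pow2_bound (R : realType) (x c : R) : 0 <= c -> (forall n : nat, x <= c / 2 ^+ n.+1) -> x <= 0.
Proof.
move=> hc h; rewrite leNgt; apply/negP => hx.
have hcx : 0 <= c / x by apply: divr_ge0 => //; lra.
set n := Num.Def.archi_bound (c / x).
have hn := archi_boundP hcx.
have h2 : (n%:R : R) <= 2 ^+ n.+1.
  have -> : (2 : R) ^+ n.+1 = (2 ^ n.+1)%N%:R by rewrite natrX.
  rewrite ler_nat; apply: ltnW; apply: ltnW; exact: ltn_expl.
have hp : (0 : R) < 2 ^+ n.+1 by apply: exprn_gt0.
have := h n; rewrite ler_pdivlMr //.
have : c / x < 2 ^+ n.+1 by lra.
rewrite ltr_pdivrMr //; nra.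
Qed.

Section An.
Variables (R : realType) (V : lmodType R) (ip : V -> V -> R).
Hypothesis hip : is_inner_product ip.

Lemma ip_def x : ip x x = 0 -> x = 0.
Proof. by case: hip => _ _ _; apply. Qed.
Lemma ip0r x : ip x 0 = 0.
Proof. by rewrite ipC // ip0l. Qed.
Lemma hnorm_ge0 x : 0 <= hnorm ip x.
Proof. exact: sqrtr_ge0. Qed.
Lemma hnorm_sq x : hnorm ip x ^+ 2 = nsq ip x.
Proof. by rewrite /hnorm sqr_sqrtr // ip_ge0. Qed.
Lemma hnormZ t x : hnorm ip (t *: x) = `|t| * hnorm ip x.
Proof.
by rewrite /hnorm ipZl // ipZr // mulrA -expr2 sqrtrM ?sqrtr_sqr // sqr_ge0.
Qed.
Lemma nsqZ t x : nsq ip (t *: x) = t ^+ 2 * nsq ip x.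
Proof. by rewrite /nsq ipZl // ipZr // mulrA -expr2. Qed.

Lemma cs a b : ip a b <= hnorm ip a * hnorm ip b.
Proof.
have key : ip a b ^+ 2 <= ip a a * ip b b.
  have [hb0|hbp] := eqVneq (ip b b) 0.
    by rewrite (ip_def hb0) !ip0r expr2 !mulr0.
  have hbpos : 0 < ip b b by rewrite lt_def hbp ip_ge0.
  have := ip_ge0 hip (ip b b *: a - ip a b *: b).
  rewrite !(ipDl hip, ipDr hip, ipNl hip, ipNr hip, ipZl hip, ipZr hip) (ipC hip b a) => h.
  nra.
apply: le_trans (ler_norm _) _.
rewrite -sqrtr_sqr /hnorm -sqrtrM ?ip_ge0 // ler_sqrt //.
by apply: mulr_ge0; apply: ip_ge0.
Qed.

Variables (mu L : R) (f : V -> R) (gradf : V -> V).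
Hypothesis hmu : 0 < mu.
Hypothesis hmuL : mu < L.
Hypothesis hsc : strongly_convex ip mu f.
Hypothesis hLs : L_smooth ip L f gradf.
Ltac hyps := have hmu0 : 0 < mu := hmu; have hmuL0 : mu < L := hmuL.

Lemma sc_grad u v : f v + ip (gradf v) (u - v) + mu / 2 * nsq ip (u - v) <= f u.
Proof.
hyps.
have hg := hLs.1.
set d := u - v; set G := ip (gradf v) d; set n2 := nsq ip d; set nd := hnorm ip d.
have hnd : 0 <= nd by apply: hnorm_ge0.
have hn2 : 0 <= n2 by apply: ip_ge0.
rewrite -subr_le0.
apply: (@eps_le0 _ _ (nd + 1)); first lra.
move=> e he.
have [del [hdel hd]] := hg v e he.
have hA : 0 < del / (2 * (nd + 1)) by apply: divr_gt0 => //; lra.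
have hmn : 0 <= mu * n2 by apply: mulr_ge0 => //; apply: ltW.
have hB : 0 < e / (mu * n2 + 1) by apply: divr_gt0 => //; lra.
have [t [ht0 [ht1 [htA htB]]]] : exists t, 0 < t /\ t <= 1 /\
    t <= del / (2 * (nd + 1)) /\ t <= e / (mu * n2 + 1).
  exists (Order.min 1 (Order.min (del / (2 * (nd + 1))) (e / (mu * n2 + 1)))).
  split; first by rewrite !lt_min ltr01 hA hB.
  split; first by rewrite ge_min lexx.
  split; first by rewrite ge_min ge_min lexx orbT.
  by rewrite ge_min ge_min lexx !orbT.
have hconv := hsc u v (l := t).
have hvec : t *: u + (1 - t) *: v = v + t *: d.
  by rewrite /d scalerBr scalerBl scale1r addrCA.
rewrite hvec in hconv.
have hconv' := hconv ltac:(by apply/andP; split; lra).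
have htd : hnorm ip (t *: d) < del.
  rewrite hnormZ ger0_norm; last lra.
  have hc : del / (2 * (nd + 1)) * (2 * (nd + 1)) = del by rewrite mulfVK // gt_eqF //; lra.
  move: hc htA hA; generalize (del / (2 * (nd + 1))) => C hc htA hA.
  have : t * nd <= C * nd by apply: ler_wpM2r.
  rewrite -/nd; lra.
have := hd _ htd; rewrite ler_norml => /andP [hl _].
move: hl; rewrite ipZr // hnormZ ger0_norm; last lra.
rewrite -/G -/nd => hl.
have hte : t * (mu * n2 + 1) <= e.
  by move: htB; rewrite ler_pdivlMr //; nra.
have h4 : t * (t * (mu * n2)) <= t * e by nra.
move: hconv'; rewrite -/n2 => hc.
nra.
Qed.

Lemma lip_ip x y d : ip (gradf x - gradf y) d <= L * hnorm ip (x - y) * hnorm ip d.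
Proof.
hyps.
apply: le_trans (cs _ _) _.
apply: ler_wpM2r; first exact: hnorm_ge0.
exact: hLs.2.
Qed.

Definition Edesc v d := f (v + d) - f v - ip (gradf v) d.

Lemma desc_base v d : Edesc v d <= L * nsq ip d.
Proof.
hyps.
have h := sc_grad v (v + d).
have e1 : v - (v + d) = - d by rewrite opprD addrA subrr add0r.
rewrite e1 in h.
have hl : ip (gradf (v + d) - gradf v) d <= L * nsq ip d.
  apply: le_trans (lip_ip _ _ _) _.
  by rewrite addrAC subrr add0r -mulrA -expr2 hnorm_sq.
have hm : 0 <= mu / 2 * nsq ip (- d).
  apply: mulr_ge0; [apply: divr_ge0; [apply: ltW|]|apply: ip_ge0] => //.
move: h hl hm; rewrite /Edesc ipNr // ipBl //.
lra.
Qed.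

Lemma desc_n n v d : Edesc v d <= (L / 2 + L / 2 ^+ n.+1) * nsq ip d.
Proof.
hyps.
elim: n v d => [|n IH] v d.
  by rewrite expr1 -splitr; apply: desc_base.
have hw : v + 2^-1 *: d + 2^-1 *: d = v + d.
  have h12 : (2^-1 + 2^-1 : R) = 1 by field.
  by rewrite -addrA -scalerDl h12 scale1r.
have h1 := IH (v + 2^-1 *: d) (2^-1 *: d).
have h2 := IH v (2^-1 *: d).
have h3 : ip (gradf (v + 2^-1 *: d) - gradf v) (2^-1 *: d) <= L * nsq ip (2^-1 *: d).
  apply: le_trans (lip_ip _ _ _) _.
  by rewrite addrAC subrr add0r -mulrA -expr2 hnorm_sq.
have E : Edesc v d = Edesc (v + 2^-1 *: d) (2^-1 *: d) + Edesc v (2^-1 *: d)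
    + ip (gradf (v + 2^-1 *: d) - gradf v) (2^-1 *: d).
  by rewrite /Edesc hw ipBl // !ipZr //; field.
rewrite E; apply: le_trans (lerD (lerD h1 h2) h3) _.
rewrite nsqZ [2 ^+ n.+2]exprS [(2 * _)^-1]invfM.
have hN := ip_ge0 hip d; rewrite -/(nsq ip d) in hN.
move: hN; generalize (nsq ip d) => N hN.
have hP : (0 : R) < 2 ^+ n.+1 by apply: exprn_gt0.
move: hP; generalize ((2 : R) ^+ n.+1) => P hP.
rewrite le_eqVlt; apply/orP; left; apply/eqP; field; exact: lt0r_neq0.
Qed.
Lemma descent v d : f (v + d) <= f v + ip (gradf v) d + L / 2 * nsq ip d.
Proof.
hyps.
have hN := ip_ge0 hip d; rewrite -/(nsq ip d) in hN.
have hL0 : 0 <= L by apply: ltW; apply: lt_trans hmu hmuL.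
suff hS : Edesc v d - L / 2 * nsq ip d <= 0 by move: hS; rewrite /Edesc; lra.
apply: (@pow2_bound _ _ (L * nsq ip d)); first exact: mulr_ge0.
move=> n; have := desc_n n v d.
rewrite mulrAC; lra.
Qed.

Lemma descent' u v : f u <= f v + ip (gradf v) (u - v) + L / 2 * nsq ip (u - v).
Proof. by have := descent v (u - v); rewrite addrCA subrr addr0. Qed.

Lemma If_aux x y u : u = x - (L - mu)^-1 *: (gradf x - gradf y - mu *: (x - y)) ->
  If ip mu L f gradf x y =
   (f u - (f y + ip (gradf y) (u - y) + mu / 2 * nsq ip (u - y)))
   + ((f x + ip (gradf x) (u - x) + L / 2 * nsq ip (u - x)) - f u).
Proof.
hyps.
move=> hu; subst u; rewrite /If /nsq.
expand_all R ip hip [:: x; y; gradf x; gradf y].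
have hLm : L - mu != 0 by apply: lt0r_neq0; lra.
by field.
Qed.

Lemma If_ge0 x y : 0 <= If ip mu L f gradf x y.
Proof.
hyps.
rewrite (If_aux erefl).
have := sc_grad (x - (L - mu)^-1 *: (gradf x - gradf y - mu *: (x - y))) y.
have := descent' (x - (L - mu)^-1 *: (gradf x - gradf y - mu *: (x - y))) x.
lra.
Qed.

Lemma opt_sub (g : V -> \bar R) xs w gxs gw : econvex g ->
  (forall w, ((f xs)%:E + g xs <= (f w)%:E + g w)%E) -> g xs = gxs%:E -> g w = gw%:E ->
  0 <= Igr ip gw gxs (- gradf xs) w xs.
Proof.
hyps.
move=> hcv hopt hgx hgw.
suff hS : gxs - gw - ip (gradf xs) (w - xs) <= 0 by move: hS; rewrite /Igr ipNl //; lra.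
have hN := ip_ge0 hip (w - xs); rewrite -/(nsq ip _) in hN.
apply: (@lim_t _ _ (L / 2 * nsq ip (w - xs))); first by apply: mulr_ge0 => //; lra.
move=> t ht0 ht1.
have hc := hcv w xs t ltac:(by apply/andP; split; lra).
have ho := hopt (t *: w + (1 - t) *: xs).
rewrite hgw hgx in hc.
have hr : f xs + gxs <= f (t *: w + (1 - t) *: xs) + (t * gw + (1 - t) * gxs).
  rewrite -lee_fin !EFinD !EFinM; apply: le_trans (leeD2l _ hc).
  by rewrite -hgx.
have hd := descent' (t *: w + (1 - t) *: xs) xs.
have hv : t *: w + (1 - t) *: xs - xs = t *: (w - xs).
  by rewrite scalerBl scale1r addrCA addrAC subrr add0r scalerBr.
rewrite hv ipZr // nsqZ in hd.
nra.
Qed.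

Lemma prox_sub (g : V -> \bar R) gam zb z w gz gw : econvex g -> 0 < gam ->
  is_prox ip g gam zb z -> g z = gz%:E -> g w = gw%:E ->
  0 <= Igr ip gw gz (gam^-1 *: (zb - z)) w z.
Proof.
hyps.
move=> hcv hgam hp hgz hgw.
suff hS : gz - gw + ip (gam^-1 *: (zb - z)) (w - z) <= 0 by move: hS; rewrite /Igr; lra.
have hN := ip_ge0 hip (w - z); rewrite -/(nsq ip _) in hN.
apply: (@lim_t _ _ ((2 * gam)^-1 * nsq ip (w - z))).
  by apply: mulr_ge0 => //; rewrite invr_ge0; lra.
move=> t ht0 ht1.
have hc := hcv w z t ltac:(by apply/andP; split; lra).
have hq := hp (t *: w + (1 - t) *: z).
rewrite hgw hgz in hc.
have hr : gz + 1 / (2 * gam) * nsq ip (zb - z) <=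
   t * gw + (1 - t) * gz + 1 / (2 * gam) * nsq ip (zb - (t *: w + (1 - t) *: z)).
  rewrite -!EFinM -EFinD in hc.
  by have := le_trans hq (leeD2r _ hc); rewrite hgz -!EFinD lee_fin.
move: hr; rewrite /nsq mul1r invfM.
expand_all R ip hip [:: zb; z; w].
move=> hr.
have hg0 : 0 < gam^-1 by rewrite invr_gt0.
nra.
Qed.
End An.


Section Sq.
Variables (R : realType) (q : R).
Hypothesis hq0 : 0 < q.
Hypothesis hq1 : q < 1.

Lemma Aseq_S k : Aseq q k.+1 = ((1 + q) * Aseq q k + 2 * (1 + sigma q k)) / (1 - q) ^+ 2.
Proof. by []. Qed.

Lemma sigma_ge1 k : 0 <= Aseq q k -> 1 <= sigma q k.
Proof.
move=> hA; have q0 : 0 < q := hq0.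
rewrite /sigma -{1}sqrtr1 ler_sqrt; last by apply: mulr_ge0; nra.
nra.
Qed.

Lemma Aseq_ge0 k : 0 <= Aseq q k.
Proof.
have q0 : 0 < q := hq0; have q1 : q < 1 := hq1.
elim: k => [|k IH] //=.
apply: divr_ge0; last by apply: sqr_ge0.
have := sigma_ge1 IH; rewrite /sigma => h.
nra.
Qed.

Lemma Aseq_le k : Aseq q k <= Aseq q k.+1.
Proof.
have q0 : 0 < q := hq0; have q1 : q < 1 := hq1.
have hA := Aseq_ge0 k; have hs := sigma_ge1 hA.
rewrite Aseq_S ler_pdivlMr; last by apply: exprn_gt0; lra.
have h1 : 0 <= q * Aseq q k by nra.
have h2 : q ^+ 2 * Aseq q k <= q * Aseq q k by rewrite expr2 -mulrA; nra.
nra.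
Qed.

Lemma Aseq_gt0 k : 0 < Aseq q k.+1.
Proof.
have q0 : 0 < q := hq0; have q1 : q < 1 := hq1.
have hA := Aseq_ge0 k; have hs := sigma_ge1 hA.
rewrite Aseq_S; apply: divr_gt0; last by apply: exprn_gt0; lra.
have h1 : 0 <= q * Aseq q k by nra.
lra.
Qed.

Lemma sigma_le k : sigma q k <= sigma q k.+1.
Proof.
have q0 : 0 < q := hq0; have q1 : q < 1 := hq1.
have hA := Aseq_ge0 k; have hA1 := Aseq_le k.
have h1 : 0 <= q * Aseq q k by nra.
have h2 : q * Aseq q k <= q * Aseq q k.+1 by nra.
rewrite /sigma ler_sqrt; last by apply: mulr_ge0; nra.
apply: ler_pM; nra.
Qed.

Lemma seq_facts k :
  let A := Aseq q k in let a := Num.sqrt (1 + A) in let b := Num.sqrt (1 + q * A) in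
  a ^+ 2 = 1 + A /\ b ^+ 2 = 1 + q * A /\ 1 <= b /\ b <= a /\
      sigma q k = a * b /\ Aseq q k.+1 = (a + b) ^+ 2 / (1 - q) ^+ 2
    /\ delta q k = (a + b) / (q * a + b).
Proof.
move=> A a b.
have q0 : 0 < q := hq0; have q1 : q < 1 := hq1.
have hA : 0 <= A := Aseq_ge0 k.
have ha : a ^+ 2 = 1 + A by rewrite sqr_sqrtr //; lra.
have hb : b ^+ 2 = 1 + q * A by rewrite sqr_sqrtr //; nra.
have hb1 : 1 <= b by rewrite /b -{1}sqrtr1 ler_sqrt; nra.
have hba : b <= a by rewrite /b /a ler_sqrt; nra.
have hs : sigma q k = a * b by rewrite /sigma -sqrtrM //; lra.
have hA1 : Aseq q k.+1 = (a + b) ^+ 2 / (1 - q) ^+ 2.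
  rewrite Aseq_S -/A hs; congr (_ / _).
  rewrite sqrrD ha hb; ring.
do 6!(split => //).
have hq : 1 - q != 0 by apply: lt0r_neq0; lra.
have hqab : q * a + b != 0 by apply: lt0r_neq0; nra.
have e : (q * a + b) ^+ 2 = (1 - q) ^+ 2 + q * (a + b) ^+ 2.
  rewrite !sqrrD !exprMn ha hb; ring.
rewrite /delta hA1.
have -> : (a + b) ^+ 2 / (1 - q) ^+ 2 / (1 + q * ((a + b) ^+ 2 / (1 - q) ^+ 2))
        = ((a + b) / (q * a + b)) ^+ 2.
  rewrite expr_div_n e; field.
  rewrite hq /=; apply/andP; split => //.
  rewrite -e; apply: lt0r_neq0; apply: exprn_gt0; nra.
rewrite sqrtr_sqr ger0_norm //; apply: divr_ge0; nra.
Qed.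
End Sq.


Lemma fin_ineq (R : realType) (rv1 rv0 p1 p2 p3 p4 p5 c1 n1 c2 n2 : R) :
  rv1 - rv0 + p1 + p2 + p3 + p4 + p5 = - c1 * n1 - c2 * n2 ->
  0 <= p1 -> 0 <= p2 -> 0 <= p3 -> 0 <= p4 -> 0 <= p5 ->
  0 <= c1 -> 0 <= n1 -> 0 <= c2 -> 0 <= n2 -> rv1 <= rv0.
Proof.
move=> E h1 h2 h3 h4 h5 hc1 hn1 hc2 hn2.
have := mulr_ge0 hc1 hn1; have := mulr_ge0 hc2 hn2.
rewrite -!mulNr in E. lra.
Qed.

Unset Implicit Arguments.
Set Strict Implicit.

Theorem lemma2 (R : realType) (V : lmodType R) (ip : V -> V -> R)
    (mu L : R) (f : V -> R) (gradf : V -> V) (g : V -> \bar R)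
    (xstar x0 : V) (x z zbar y : nat -> V) :
  is_hilbert ip ->
  0 < mu -> mu < L ->
  strongly_convex ip mu f ->
  L_smooth ip L f gradf ->
  econvex g -> eproper g -> elsc ip g ->
  (forall w : V, ((f xstar)%:E + g xstar <= (f w)%:E + g w)%E) ->
  x 0%N = x0 ->
  z 0%N = x0 ->
  (forall k : nat,
      y k = (1 - beta (mu / L) k) *: z k + beta (mu / L) k *: x k) ->
  (forall k : nat,
      zbar k.+1 = (1 - mu / L * delta (mu / L) k) *: z k
                  + (mu / L * delta (mu / L) k) *: y k
                  - (delta (mu / L) k / L) *: gradf (y k)) ->
  (forall k : nat, is_prox ip g (delta (mu / L) k / L) (zbar k.+1) (z k.+1)) ->
  (forall k : nat,
      x k.+1 = y k - L^-1 *: gradf (y k)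
               - (delta (mu / L) k)^-1 *: (zbar k.+1 - z k.+1)) ->
  forall k : nat,
    (Vk ip mu L f gradf g xstar zbar z y k.+1
       <= Vk ip mu L f gradf g xstar zbar z y k)%E.
Proof.
move=> hH hmu hmuL hsc hLs hcv hprop _ hopt hx0 hz0 hy hzb hprox hxk k.
have hip := hH.1.
have hL : 0 < L by lra.
have hq0 : 0 < mu / L by apply: divr_gt0.
have hq1 : mu / L < 1 by rewrite ltr_pdivrMr // mul1r.
have [hninf [x1 hx1]] := hprop.
have [r1 hr1] : exists r, g x1 = r%:E.
  by move: (hninf x1) hx1; case: (g x1) => [r| |] // _ _; exists r.
have [gxs hgxs] : exists r, g xstar = r%:E.
  move: (hopt x1) (hninf xstar); rewrite hr1; case: (g xstar) => [r| |] //; first by exists r.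
have gzf : forall j, exists r, g (z j.+1) = r%:E.
  move=> j; have := hprox j xstar; rewrite hgxs.
  move: (hninf (z j.+1)); case: (g (z j.+1)) => [r| |] //; first by exists r.
have hsgS : forall j, sg (mu / L) L zbar z j.+1 = (L / delta (mu / L) j) *: (zbar j.+1 - z j.+1).
  by move=> j; rewrite /sg; have -> : maxn j.+1 1 = j.+1 by apply/maxn_idPl.
have hdel : forall j, 0 < delta (mu / L) j.
  move=> j; have [_ [_ [hb1 [hba [_ [_ ->]]]]]] := seq_facts hq0 hq1 j.
  apply: divr_gt0; nra.
have hsub : forall j w gw gz1, g w = gw%:E -> g (z j.+1) = gz1%:E ->
    0 <= Igr ip gw gz1 (sg (mu / L) L zbar z j.+1) w (z j.+1).
  move=> j w gw gz1 hw hz; rewrite hsgS -[L / _]invf_div.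
  apply: (prox_sub hip hmu hmuL hcv _ (hprox j) hz hw).
  by apply: divr_gt0.
have hk : k = 0%N \/ exists j, k = j.+1 by case: (k) => [|j]; [left | right; exists j].
have [gz1 hgz1] := gzf k.
have [gzk hgzk] : exists r, k = 0%N \/ g (z k) = r%:E.
  case: hk => [->|[j ->]]; first by exists 0; left.
  by have [r hr] := gzf j; exists r; right.
have hV1 : Vk ip mu L f gradf g xstar zbar z y k.+1 =
   (RV ip mu L (Aseq (mu / L) k.+1) (sigma (mu / L) k.+1) (If ip mu L f gradf (y k) xstar)
      gxs gz1 xstar (z k.+1) (sg (mu / L) L zbar z k.+1) (gradf xstar))%:E.
  by rewrite /Vk /Ig hgz1 hgxs /RV /Igr -!EFinB -!EFinM -!EFinD.
have hV0 : Vk ip mu L f gradf g xstar zbar z y k =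
   (RV ip mu L (Aseq (mu / L) k) (sigma (mu / L) k) (If ip mu L f gradf (y k.-1) xstar)
      gxs gzk xstar (z k) (sg (mu / L) L zbar z k) (gradf xstar))%:E.
  case: hgzk => [hk0|hz]; last first.
    by rewrite /Vk /Ig hz hgxs /RV /Igr -!EFinB -!EFinM -!EFinD.
  subst k.
  have hs0 : sigma (mu / L) 0 = 1 by rewrite /sigma /= mulr0 addr0 mulr1 sqrtr1.
  rewrite /Vk /RV /Igr hs0 /=.
  by rewrite !mulr0 !mul0r !add0r subrr !mul0e !mul0r !add0r.
rewrite hV1 hV0 lee_fin.
have K : KeyStmt ip mu L (Aseq (mu / L) k) (sigma (mu / L) k) (Aseq (mu / L) k.+1)
    (delta (mu / L) k) (sigma (mu / L) k.+1) xstar (z k) (y k.-1) (gradf (y k.-1))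
    (sg (mu / L) L zbar z k) (gradf xstar) (gradf (y k)) (sg (mu / L) L zbar z k.+1)
    (y k) (zbar k.+1) (z k.+1) (f (y k.-1)) (f (y k)) (f xstar) gxs gzk gz1.
  have [ha [hb [hb1 [hba [hs [hA1 hd]]]]]] := seq_facts hq0 hq1 k.
  have ha0 : 0 <= Num.sqrt (1 + Aseq (mu / L) k) := sqrtr_ge0 _.
  have hAg : 0 <= Aseq (mu / L) k := Aseq_ge0 hq0 hq1 k.
  have hApos : k = 0%N \/ 0 < Aseq (mu / L) k.
    by case: hk => [->|[j ->]]; [left | right; apply: Aseq_gt0].
  rewrite hs hA1 hd.
  move: ha hb hb1 hba ha0.
  generalize (Num.sqrt (1 + Aseq (mu / L) k)) (Num.sqrt (1 + mu / L * Aseq (mu / L) k)).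
  move=> a b ha hb hb1 hba ha0.
  have hA : Aseq (mu / L) k = a ^+ 2 - 1 by rewrite ha; ring.
  case: hApos => [hk0|hAp].
    subst k.
    have hA0 : Aseq (mu / L) 0 = 0 by [].
    rewrite hA0 mulr0 addr0 in ha hb.
    have ea : a = 1 by apply/eqP; rewrite eq_le; apply/andP; split; nra.
    have eb : b = 1 by apply/eqP; rewrite eq_le; apply/andP; split; nra.
    rewrite hA ea eb.
    exact: (key0 hip).
  rewrite hA.
  have hAn : Aseq (mu / L) k != 0 by apply: lt0r_neq0.
  apply: (key hip) => //.
  - nra.
  - nra.
  - rewrite hb ha; field; apply/andP; split; apply: lt0r_neq0; lra.
have hdk := hdel k.
have hy' : y k = (1 - Aseq (mu / L) k / ((1 - mu / L) * Aseq (mu / L) k.+1)) *: z k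
    + (Aseq (mu / L) k / ((1 - mu / L) * Aseq (mu / L) k.+1)) *:
      (y k.-1 - L^-1 *: (gradf (y k.-1) + sg (mu / L) L zbar z k)).
  rewrite [LHS]hy /beta; congr (_ + _).
  case: hk => [->|[j ->]]; first by rewrite /= !mul0r !scale0r.
  congr (_ *: _); rewrite hxk hsgS /= [L^-1 *: (_ + _)]scalerDr [L^-1 *: (_ *: _)]scalerA opprD addrA.
  have hdj := hdel j.
  by rewrite mulrA mulVf ?mul1r // gt_eqF.
have hz1' : z k.+1 = zbar k.+1 - (delta (mu / L) k / L) *: sg (mu / L) L zbar z k.+1.
  rewrite hsgS scalerA.
  have -> : delta (mu / L) k / L * (L / delta (mu / L) k) = 1.
    by field; apply/andP; split; apply: lt0r_neq0.
  by rewrite scale1r opprB addrC subrK.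
have E := K hy' (hzb k) hz1'.
have hA0 := Aseq_ge0 hq0 hq1 k.
have hA1 := Aseq_le hq0 hq1 k.
have hs1 := sigma_le hq0 hq1 k.
have hsg1 := sigma_ge1 hq0 hA0.
apply: (@fin_ineq _ _ _ _ _ _ _ _ _ _ _ _ E).
- apply: mulr_ge0; first by apply: mulr_ge0; lra.
  exact: (If_ge0 hip hmu hmuL hsc hLs).
- apply: mulr_ge0; first by apply: mulr_ge0; lra.
  exact: (If_ge0 hip hmu hmuL hsc hLs).
- case: hk => [hk0|[j hj]].
    subst k; have -> : sigma (mu / L) 0 = 1 by rewrite /sigma /= mulr0 addr0 mulr1 sqrtr1.
    by rewrite subrr mul0r.
  apply: mulr_ge0; first lra.
  case: hgzk => [hk0|hz]; first by move: hk0; rewrite hj.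
  subst k; exact: (hsub j _ _ _ hgz1 hz).
- apply: mulr_ge0; first lra.
  exact: (opt_sub hip hmu hmuL hsc hLs hcv hopt hgxs hgz1).
- apply: mulr_ge0; first lra.
  exact: (hsub k _ _ _ hgxs hgz1).
- apply: divr_ge0; lra.
- exact: ip_ge0.
- apply: divr_ge0; lra.
- exact: ip_ge0.
Qed.
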